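(* Let \(a,b,c\) be positive integers, \(m\) a positive integer that is not a perfect square, with \(\gcd(am,b^2-c^2m)=1\), and let \(A,B\in\mathbb Z\). Let \((\bar x,\bar y,\bar z,\bar w)\) be the unique element of \(\mathbb Z^4\) with \(0\leq\bar z<am\), \(0\leq\bar w<a\) satisfying \(a\sqrt m(\bar x+\bar y\sqrt m)+(b+c\sqrt m)(\bar z+\bar w\sqrt m)=A+B\sqrt m\). Then the equation \(a\sqrt m(x+y\sqrt m)+(b+c\sqrt m)(z+w\sqrt m)=A+B\sqrt m\) has a solution with \(x,y,z,w\in\mathbb N\) if and only if \(\bar x\geq 0\) and \(\bar y\geq 0\).
   Context: \(\mathbb N\) denotes the set of non-negative integers. (Existence and uniqueness of \((\bar x,\bar y,\bar z,\bar w)\) under the stated hypotheses may be assumed.) *)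

(* Defs.v *)
From mathcomp Require Import all_boot all_order all_algebra.
From mathcomp Require Import reals.
Set Implicit Arguments. Unset Strict Implicit. Unset Printing Implicit Defensive.
Import Order.TTheory GRing.Theory Num.Theory.
Local Open Scope ring_scope.

Definition sol_eq (R : realType) (a b c m : nat) (A B x y z w : int) : Prop :=
  let s := Num.sqrt (m%:R : R) in
  a%:R * s * (x%:~R + y%:~R * s) + (b%:R + c%:R * s) * (z%:~R + w%:~R * s)
  = A%:~R + B%:~R * s.

Definition is_square (m : nat) : Prop := exists k : nat, m = (k * k)%N.

(* Main.v *)
Require Import Defs.
From mathcomp Require Import all_boot all_order all_algebra.
From mathcomp Require Import reals ring lra zify.
Import Order.TTheory GRing.Theory Num.Theory.

Lemma sq_nat (m P Q : nat) : m * Q ^ 2 = P ^ 2 -> 0 < Q -> is_square m.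
Proof.
move=> E Q0.
set g := gcdn P Q.
have g0 : 0 < g by rewrite gcdn_gt0 Q0 orbT.
have dP : P = (P %/ g) * g by rewrite divnK // dvdn_gcdl.
have dQ : Q = (Q %/ g) * g by rewrite divnK // dvdn_gcdr.
set P' := P %/ g in dP; set Q' := Q %/ g in dQ.
have cop : coprime P' Q'.
  have : gcdn P' Q' * g = g by rewrite muln_gcdl -dP -dQ.
  by rewrite /coprime => h; apply/eqP; apply/eqP; rewrite -(eqn_pmul2r g0) mul1n h.
have E' : m * Q' ^ 2 = P' ^ 2.
  apply/eqP; rewrite -(eqn_pmul2r (_ : 0 < g ^ 2)) ?expn_gt0 ?g0 //.
  by rewrite -mulnA -!expnMn -dP -dQ E.
have dv : Q' ^ 2 %| P' ^ 2 by rewrite -E' dvdn_mull.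
have c2 : coprime (Q' ^ 2) (P' ^ 2) by rewrite coprime_pexpl // coprime_pexpr // coprime_sym.
have : Q' ^ 2 = 1 by move: c2; rewrite /coprime (gcdn_idPl dv) => /eqP.
move=> h; exists P'; by rewrite -[m]muln1 -h E' mulnn.
Qed.
Local Open Scope ring_scope.
Lemma decomp (R : realType) (a b c m : nat) (A B x y z w : int) :
  let s := Num.sqrt (m%:R : R) in
  sol_eq R a b c m A B x y z w <->
  ((a%:Z * m%:Z * y + b%:Z * z + c%:Z * m%:Z * w - A)%:~R
    + (a%:Z * x + c%:Z * z + b%:Z * w - B)%:~R * s = 0 :> R).
Proof.
move=> s; rewrite /sol_eq -/s.
have ss : s * s = m%:R by rewrite -expr2 sqr_sqrtr // ler0n.
have nz : forall n : nat, (n%:Z)%:~R = n%:R :> R by [].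
rewrite !(rmorphD, rmorphB, rmorphN, rmorphM) /= !nz.
have key : (a%:R * s * (x%:~R + y%:~R * s) + (b%:R + c%:R * s) * (z%:~R + w%:~R * s) -
 (A%:~R + B%:~R * s)) = (a%:R * m%:R * y%:~R + b%:R * z%:~R + c%:R * m%:R * w%:~R - A%:~R +
   (a%:R * x%:~R + c%:R * z%:~R + b%:R * w%:~R - B%:~R) * s) + (a%:R * y%:~R + c%:R * w%:~R) * (s * s - m%:R) :> R by ring.
rewrite ss subrr mulr0 addr0 in key.
split=> H.
  by rewrite -key H subrr.

by apply/eqP; rewrite -subr_eq0 key H.
Qed.
Lemma irr (R : realType) (m : nat) (p q : int) : ~ is_square m ->
  p%:~R + q%:~R * Num.sqrt (m%:R : R) = 0 -> p = 0 /\ q = 0.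
Proof.
move=> nsq H.
set s := Num.sqrt (m%:R : R) in H.
have ss : s * s = m%:R by rewrite -expr2 sqr_sqrtr // ler0n.
have h : q%:~R * s = - p%:~R by apply/eqP; rewrite -addr_eq0 addrC H.
have E : (m%:Z * q ^+ 2) = p ^+ 2.
  apply: (intr_inj (R := R)).
  rewrite rmorphM rmorphXn rmorphXn /= -[p%:~R]opprK -h.
  have nz : (m%:Z)%:~R = m%:R :> R by [].
  by rewrite nz -ss; ring.
have En : (m * `|q| ^ 2 = `|p| ^ 2)%N by rewrite -!abszX -E abszM.
have [q0|qp] := eqVneq `|q|%N 0%N.
  have p0 : `|p|%N = 0%N by move: En; rewrite q0; nia.
  by move/eqP: p0; rewrite absz_eq0 => /eqP ->; move/eqP: q0; rewrite absz_eq0 => /eqP ->.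
by case: (nsq (@sq_nat _ _ _ En _)); rewrite lt0n.
Qed.
Lemma core (a b c m x y z w xb yb zb wb u v : int) :
 0 < a -> 0 <= b -> 0 <= c -> 0 < m ->
 u * (a * m) + v * (b ^+ 2 - c ^+ 2 * m) = 1 ->
 0 <= zb < a * m -> 0 <= wb < a -> 0 <= x -> 0 <= y -> 0 <= z -> 0 <= w ->
 a * m * y + b * z + c * m * w = a * m * yb + b * zb + c * m * wb ->
 a * x + c * z + b * w = a * xb + c * zb + b * wb ->
 0 <= xb /\ 0 <= yb.
Proof.
move=> a0 b0 c0 m0 huv /andP[zb0 zb1] /andP[wb0 wb1] x0 y0 z0 w0 e1 e2.
set D := b ^+ 2 - c ^+ 2 * m.
have hz : D * (z - zb) = a * m * (c * (x - xb) - b * (y - yb)).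
  apply/eqP; rewrite -subr_eq0; apply/eqP.
  have -> : D * (z - zb) - a * m * (c * (x - xb) - b * (y - yb)) =
    b * ((a * m * y + b * z + c * m * w) - (a * m * yb + b * zb + c * m * wb))
    - c * m * ((a * x + c * z + b * w) - (a * xb + c * zb + b * wb)) by rewrite /D; ring.
  by rewrite e1 e2 !subrr !mulr0 subrr.
have hw : D * (w - wb) = a * (c * m * (y - yb) - b * (x - xb)).
  apply/eqP; rewrite -subr_eq0; apply/eqP.
  have -> : D * (w - wb) - a * (c * m * (y - yb) - b * (x - xb)) =
    b * ((a * x + c * z + b * w) - (a * xb + c * zb + b * wb))
    - c * ((a * m * y + b * z + c * m * w) - (a * m * yb + b * zb + c * m * wb)) by rewrite /D; ring.
  by rewrite e1 e2 !subrr !mulr0 subrr.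
set k := u * (z - zb) + v * (c * (x - xb) - b * (y - yb)).
set l := u * m * (w - wb) + v * (c * m * (y - yb) - b * (x - xb)).
have hk : z - zb = a * m * k.
  have -> : z - zb = (z - zb) * (u * (a * m) + v * D) by rewrite huv mulr1.
  have -> : (z - zb) * (u * (a * m) + v * D) = a * m * (u * (z - zb)) + v * (D * (z - zb)) by ring.
  by rewrite hz /k; ring.
have hl : w - wb = a * l.
  have -> : w - wb = (w - wb) * (u * (a * m) + v * D) by rewrite huv mulr1.
  have -> : (w - wb) * (u * (a * m) + v * D) = a * (u * m * (w - wb)) + v * (D * (w - wb)) by ring.
  by rewrite hw /l; ring.
clearbody k l.
have k0 : 0 <= k by nia.
have l0 : 0 <= l by nia.
have am0 : a * m != 0 by rewrite mulf_eq0 negb_or !gt_eqF.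
have hy : y - yb + b * k + c * l = 0.
  have : a * m * (y - yb + b * k + c * l) = (a * m * y + b * z + c * m * w) - (a * m * yb + b * zb + c * m * wb) - b * ((z - zb) - a * m * k) - c * m * ((w - wb) - a * l) by ring.
  rewrite e1 -hk -hl !subrr !mulr0 !subr0 => /eqP; rewrite mulf_eq0 (negbTE am0) /=.
  by move/eqP.
have hx : x - xb + c * m * k + b * l = 0.
  have : a * (x - xb + c * m * k + b * l) = (a * x + c * z + b * w) - (a * xb + c * zb + b * wb) - c * ((z - zb) - a * m * k) - b * ((w - wb) - a * l) by ring.
  rewrite e2 -hk -hl !subrr !mulr0 !subr0 => /eqP; rewrite mulf_eq0 gt_eqF //=.
  by move/eqP.
split; nia.
Qed.
Lemma eqs (R : realType) (a b c m : nat) (A B x y z w : int) : ~ is_square m ->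
  sol_eq R a b c m A B x y z w <->
  (a%:Z * m%:Z * y + b%:Z * z + c%:Z * m%:Z * w = A /\
   a%:Z * x + c%:Z * z + b%:Z * w = B).
Proof.
move=> nsq; split.
  move/(decomp R a b c m A B x y z w) => /(@irr R _ _ _ nsq) [/eqP h1 /eqP h2].
  by move: h1 h2; rewrite !subr_eq0 => /eqP -> /eqP ->.
case=> h1 h2; apply/(decomp R a b c m A B x y z w).
by rewrite h1 h2 !subrr mul0r addr0.
Qed.

Theorem lemma12 (R : realType) (a b c m : nat) (A B : int)
    (xb yb zb wb : int) :
  (0 < a)%N -> (0 < b)%N -> (0 < c)%N -> (0 < m)%N ->
  ~ is_square m ->
  gcdz (a * m)%N%:Z (b%:Z ^+ 2 - c%:Z ^+ 2 * m%:Z) = 1 ->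
  0 <= zb < (a * m)%N%:Z -> 0 <= wb < a%:Z ->
  sol_eq R a b c m A B xb yb zb wb ->
  ((exists x y z w : nat, sol_eq R a b c m A B x%:Z y%:Z z%:Z w%:Z)
   <-> (0 <= xb /\ 0 <= yb)).
Proof.
move=> a0 b0 c0 m0 nsq hg hz hw /(@eqs _ _ _ _ _ _ _ _ _ _ _ nsq) [f1 f2].
split.
  case=> x [y [z [w]]] /(@eqs _ _ _ _ _ _ _ _ _ _ _ nsq) [e1 e2].
  have : coprimez (a * m)%N%:Z (b%:Z ^+ 2 - c%:Z ^+ 2 * m%:Z) by rewrite /coprimez hg.
  case/coprimezP => [[u v]] /= huv.
  rewrite PoszM in huv hz.
  apply: (@core a b c m x y z w xb yb zb wb u v) => //.
  - by rewrite e1 f1.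
  - by rewrite e2 f2.
case=> x0 y0.
case/andP: hz => z0 _; case/andP: hw => w0 _.
exists `|xb|%N, `|yb|%N, `|zb|%N, `|wb|%N.
rewrite !gez0_abs //.
by apply/(@eqs _ _ _ _ _ _ _ _ _ _ _ nsq).
Qed.
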